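(* Let $n=2$, let $H$ be a constant with $|H|<1$, and let $\varphi\in C^5((-1,1))$. Write points of $\mathbb R^2$ as $(x_1,x_2)$ and let $$Q(u)=\Delta u-\frac{u_iu_j}{1+|Du|^2}u_{ij}-\frac{2}{x_2}\Big(u_2-H\sqrt{1+|Du|^2}\Big).$$ Suppose $c_1,c_2,c_{3,1}\in C^2((-1,1))$ are functions of $x_1$ such that, for $$u_*=\varphi(x_1)+c_1(x_1)x_2+c_2(x_1)x_2^2+c_{3,1}(x_1)x_2^3\log x_2,$$ one has $Q(u_* )(x_1,x_2)=o(x_2)$ as $x_2\to0^+$ for each $x_1\in(-1,1)$. Then $c_{3,1}\equiv0$.
   Context: Subscripts denote partial derivatives and repeated indices are summed over $1,2$. The functions $c_1,c_2,c_{3,1}$ are the coefficients of the formal boundary expansion of solutions of $Q(u)=0$ with $u=\varphi$ on $\{x_2=0\}$; they are determined by requiring that the coefficients of $x_2^{-1}$, $x_2^0$ and $x_2^1$ in the expansion of $Q(u_* )$ vanish (in particular $c_1=\frac{H}{\sqrt{1-H^2}}\sqrt{1+\varphi'^2}$). *)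

(* Defs.v *)
From Stdlib Require Import Reals.
From Coquelicot Require Import Coquelicot.
Open Scope R_scope.

Definition Ck_on (k : nat) (f : R -> R) (a b : R) : Prop :=
  forall x, a < x < b ->
    (forall m, (m <= k)%nat -> ex_derive_n f m x) /\
    continuous (Derive_n f k) x.

Definition ustar (phi c1 c2 c31 : R -> R) (x1 x2 : R) : R :=
  phi x1 + c1 x1 * x2 + c2 x1 * x2 ^ 2 + c31 x1 * x2 ^ 3 * ln x2.

Definition Qop (H : R) (u : R -> R -> R) (x1 x2 : R) : R :=
  let u1  := Derive (fun s => u s x2) x1 in
  let u2  := Derive (fun t => u x1 t) x2 in
  let u11 := Derive (fun s => Derive (fun s' => u s' x2) s) x1 in
  let u22 := Derive (fun t => Derive (fun t' => u x1 t') t) x2 in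
  let u12 := Derive (fun t => Derive (fun s => u s t) x1) x2 in
  let u21 := Derive (fun s => Derive (fun t => u s t) x2) x1 in
  let W := 1 + u1 ^ 2 + u2 ^ 2 in
  (u11 + u22)
  - (u1 * u1 * u11 + u1 * u2 * u12 + u2 * u1 * u21 + u2 * u2 * u22) / W
  - 2 / x2 * (u2 - H * sqrt W).

(* Main.v *)
Require Import Defs.
From Stdlib Require Import Reals Lra Lia.
From Coquelicot Require Import Coquelicot.
Open Scope R_scope.

Lemma Ck_ex k f a b x m : Ck_on k f a b -> a < x < b -> (m <= k)%nat -> ex_derive_n f m x.
Proof. intros H Hx Hm. apply (proj1 (H x Hx)); auto. Qed.

Lemma loc_int x : -1 < x < 1 -> locally x (fun s => -1 < s < 1).
Proof.
  intros Hx. assert (He : 0 < Rmin (x+1) (1-x)) by (apply Rmin_glb_lt; lra).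
  exists (mkposreal _ He). intros y Hy. unfold ball in Hy; simpl in Hy.
  unfold AbsRing_ball, abs, minus, plus, opp in Hy; simpl in Hy.
  apply Rabs_lt_between' in Hy.
  destruct Hy as [H1 H2].
  pose proof (Rmin_l (x+1) (1-x)). pose proof (Rmin_r (x+1) (1-x)). lra.
Qed.

Lemma loc_pos x : 0 < x -> locally x (fun s => 0 < s).
Proof.
  intros Hx. exists (mkposreal _ Hx). intros y Hy. unfold ball in Hy; simpl in Hy.
  unfold AbsRing_ball, abs, minus, plus, opp in Hy; simpl in Hy.
  apply Rabs_lt_between' in Hy. lra.
Qed.

Ltac eta_fix := repeat match goal with |- context [fun x : R => ?f x] => change (fun x : R => f x) with f end.

Lemma D1 (phi c1 c2 c31 : R -> R) x1 t : ex_derive phi x1 -> ex_derive c1 x1 -> ex_derive c2 x1 -> ex_derive c31 x1 ->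
  Derive (fun s => ustar phi c1 c2 c31 s t) x1 = Derive phi x1 + Derive c1 x1 * t + Derive c2 x1 * t^2 + Derive c31 x1 * t^3 * ln t.
Proof. intros. apply is_derive_unique. unfold ustar. auto_derive; auto. eta_fix. ring. Qed.

Lemma D2 (phi c1 c2 c31 : R -> R) x1 t : 0 < t ->
  Derive (fun t' => ustar phi c1 c2 c31 x1 t') t = c1 x1 + 2 * c2 x1 * t + c31 x1 * (3 * t^2 * ln t + t^2).
Proof. intros. apply is_derive_unique. unfold ustar. auto_derive; auto. field. lra. Qed.

Lemma D11 (phi c1 c2 c31 : R -> R) x1 t :
  -1 < x1 < 1 -> Ck_on 5 phi (-1) 1 -> Ck_on 2 c1 (-1) 1 -> Ck_on 2 c2 (-1) 1 -> Ck_on 2 c31 (-1) 1 ->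
  Derive (fun s => Derive (fun s' => ustar phi c1 c2 c31 s' t) s) x1 =
  Derive (Derive phi) x1 + Derive (Derive c1) x1 * t + Derive (Derive c2) x1 * t^2 + Derive (Derive c31) x1 * t^3 * ln t.
Proof.
  intros Hx Hp H1 H2 H3.
  rewrite (Derive_ext_loc _ (fun s => Derive phi s + Derive c1 s * t + Derive c2 s * t^2 + Derive c31 s * t^3 * ln t)).
  - apply is_derive_unique. auto_derive.
    + repeat split.
      * exact (Ck_ex 5 phi _ _ x1 2 Hp Hx ltac:(lia)).
      * exact (Ck_ex 2 c1 _ _ x1 2 H1 Hx ltac:(lia)).
      * exact (Ck_ex 2 c2 _ _ x1 2 H2 Hx ltac:(lia)).
      * exact (Ck_ex 2 c31 _ _ x1 2 H3 Hx ltac:(lia)).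
    + eta_fix. ring.
  - apply (filter_imp (fun s => -1 < s < 1)); [|apply loc_int; auto].
    intros s Hs. apply D1.
    + exact (Ck_ex 5 phi _ _ s 1 Hp Hs ltac:(lia)).
    + exact (Ck_ex 2 c1 _ _ s 1 H1 Hs ltac:(lia)).
    + exact (Ck_ex 2 c2 _ _ s 1 H2 Hs ltac:(lia)).
    + exact (Ck_ex 2 c31 _ _ s 1 H3 Hs ltac:(lia)).
Qed.

Lemma D22 (phi c1 c2 c31 : R -> R) x1 t : 0 < t ->
  Derive (fun t' => Derive (fun t'' => ustar phi c1 c2 c31 x1 t'') t') t = 2 * c2 x1 + c31 x1 * (6 * t * ln t + 5 * t).
Proof.
  intros Ht.
  rewrite (Derive_ext_loc _ (fun t' => c1 x1 + 2 * c2 x1 * t' + c31 x1 * (3 * t'^2 * ln t' + t'^2))).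
  - apply is_derive_unique. auto_derive; auto. field. lra.
  - apply (filter_imp (fun s => 0 < s)); [|apply loc_pos; auto].
    intros s Hs. apply D2; auto.
Qed.

Lemma D12 (phi c1 c2 c31 : R -> R) x1 t : 0 < t ->
  ex_derive phi x1 -> ex_derive c1 x1 -> ex_derive c2 x1 -> ex_derive c31 x1 ->
  Derive (fun t' => Derive (fun s => ustar phi c1 c2 c31 s t') x1) t =
  Derive c1 x1 + 2 * Derive c2 x1 * t + Derive c31 x1 * (3 * t^2 * ln t + t^2).
Proof.
  intros Ht Ha Hb Hc Hd.
  rewrite (Derive_ext _ (fun t' => Derive phi x1 + Derive c1 x1 * t' + Derive c2 x1 * t'^2 + Derive c31 x1 * t'^3 * ln t')).
  - apply is_derive_unique. auto_derive; auto. field. lra.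
  - intros s. apply D1; auto.
Qed.

Lemma D21 (phi c1 c2 c31 : R -> R) x1 t : 0 < t ->
  ex_derive c1 x1 -> ex_derive c2 x1 -> ex_derive c31 x1 ->
  Derive (fun s => Derive (fun t' => ustar phi c1 c2 c31 s t') t) x1 =
  Derive c1 x1 + 2 * Derive c2 x1 * t + Derive c31 x1 * (3 * t^2 * ln t + t^2).
Proof.
  intros Ht Hb Hc Hd.
  rewrite (Derive_ext _ (fun s => c1 s + 2 * c2 s * t + c31 s * (3 * t^2 * ln t + t^2))).
  - apply is_derive_unique. auto_derive; auto. eta_fix. ring.
  - intros s. apply D2; auto.
Qed.

Definition F0 := at_right 0.

Lemma lim_plus (f g : R -> R) a b : filterlim f F0 (locally a) -> filterlim g F0 (locally b) ->
  filterlim (fun x => f x + g x) F0 (locally (a + b)).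
Proof. intros Hf Hg. eapply filterlim_comp_2; [exact Hf|exact Hg|]. apply (filterlim_plus a b). Qed.

Lemma lim_mult (f g : R -> R) a b : filterlim f F0 (locally a) -> filterlim g F0 (locally b) ->
  filterlim (fun x => f x * g x) F0 (locally (a * b)).
Proof. intros Hf Hg. eapply filterlim_comp_2; [exact Hf|exact Hg|]. apply (filterlim_mult a b). Qed.

Lemma lim_opp (f : R -> R) a : filterlim f F0 (locally a) -> filterlim (fun x => - f x) F0 (locally (- a)).
Proof. intros Hf. eapply filterlim_comp; [exact Hf|]. apply (filterlim_opp a). Qed.

Lemma lim_minus (f g : R -> R) a b : filterlim f F0 (locally a) -> filterlim g F0 (locally b) ->
  filterlim (fun x => f x - g x) F0 (locally (a - b)).
Proof. intros Hf Hg. apply (lim_plus f (fun x => - g x)); auto. apply lim_opp; auto. Qed.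

Lemma lim_const (c : R) : filterlim (fun _ : R => c) F0 (locally c).
Proof. apply filterlim_const. Qed.

Lemma lim_id : filterlim (fun x : R => x) F0 (locally (0:R)).
Proof.
  intros P [e He]. exists e. intros y Hy _. apply He. exact Hy.
Qed.

Lemma lim_inv (f : R -> R) a : a <> 0 -> filterlim f F0 (locally a) -> filterlim (fun x => / f x) F0 (locally (/ a)).
Proof.
  intros Ha Hf. eapply filterlim_comp; [exact Hf|].
  apply (filterlim_Rbar_inv (Finite a)). intro E. apply Ha. injection E; auto.
Qed.

Lemma lim_div (f g : R -> R) a b : filterlim f F0 (locally a) -> filterlim g F0 (locally b) -> b <> 0 ->
  filterlim (fun x => f x / g x) F0 (locally (a / b)).
Proof. intros Hf Hg Hb. apply (lim_mult f (fun x => / g x)); auto. apply lim_inv; auto. Qed.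

Lemma lim_pow (f : R -> R) a n : filterlim f F0 (locally a) -> filterlim (fun x => f x ^ n) F0 (locally (a ^ n)).
Proof.
  intros Hf. induction n as [|n IH]; simpl.
  - apply lim_const.
  - apply (lim_mult f (fun x => f x ^ n)); auto.
Qed.

Lemma lim_sqrt (f : R -> R) a : 0 <= a -> filterlim f F0 (locally a) -> filterlim (fun x => sqrt (f x)) F0 (locally (sqrt a)).
Proof.
  intros Ha Hf. eapply filterlim_comp; [exact Hf|].
  apply continuity_pt_filterlim. apply continuity_pt_sqrt; auto.
Qed.

Lemma lim_tau : filterlim (fun x => x * ln x) F0 (locally (0:R)).
Proof.
  apply (filterlim_ext_loc (fun x => - (ln (/ x) / (/ x)))).
  - exists (mkposreal 1 Rlt_0_1). intros y _ Hy.
    rewrite ln_Rinv; auto. field. lra.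
  - replace 0 with (- 0) by ring. apply lim_opp.
    apply (filterlim_comp _ _ _ (fun x => / x) (fun y => ln y / y) F0 (Rbar_locally p_infty)).
    + exact filterlim_Rinv_0_right.
    + exact is_lim_div_ln_p.
Qed.

Lemma lim_val (f : R -> R) (a b : R) : filterlim f F0 (locally a) -> a = b -> filterlim f F0 (locally b).
Proof. intros H E; subst; auto. Qed.

Lemma lim_uniq (f : R -> R) (a b : R) : filterlim f F0 (locally a) -> filterlim f F0 (locally b) -> a = b.
Proof. intros Ha Hb. eapply (filterlim_locally_unique (F := F0)); eauto. Qed.

Ltac lim_rec :=
  first
  [ eassumption
  | exact lim_id
  | exact lim_tau
  | lazymatch goal with
    | |- filterlim (fun _ => ?c) _ _ => exact (lim_const c)
    | |- filterlim (fun t => @?f t + @?g t) _ _ => eapply (lim_plus f g); [lim_rec|lim_rec]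
    | |- filterlim (fun t => @?f t - @?g t) _ _ => eapply (lim_minus f g); [lim_rec|lim_rec]
    | |- filterlim (fun t => @?f t * @?g t) _ _ => eapply (lim_mult f g); [lim_rec|lim_rec]
    | |- filterlim (fun t => @?f t / @?g t) _ _ => eapply (lim_div f g); [lim_rec|lim_rec|]
    | |- filterlim (fun t => - @?f t) _ _ => eapply (lim_opp f); lim_rec
    | |- filterlim (fun t => @?f t ^ ?n) _ _ => eapply (lim_pow f _ n); lim_rec
    end ].

Goal forall a b, filterlim (fun t => a + b * t * (t * ln t) + (t+1)^2 / (1 + t)) F0 (locally (a+1)).
Proof. intros. eapply lim_val. lim_rec. all: try lra. Qed.
Record prm := { cp:R; cP:R; cq:R; cq1:R; cq2:R; cr:R; cr1:R; cr2:R; cs:R; cs1:R; cs2:R }.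

Definition U1 c t tau := cq1 c + cr1 c * t + cs1 c * t * tau.
Definition U2 c t tau := 2 * cr c + 3 * cs c * tau + cs c * t.
Definition U20 c tau := 2 * cr c + 3 * cs c * tau.
Definition U11 c t tau := cq2 c + cr2 c * t + cs2 c * t * tau.
Definition U12 c t tau := 2 * cr1 c + 3 * cs1 c * tau + cs1 c * t.
Definition uu1 c t tau := cp c + t * U1 c t tau.
Definition uu2 c t tau := cq c + t * U2 c t tau.
Definition uu11 c t tau := cP c + t * U11 c t tau.
Definition uu12 c t tau := cq1 c + t * U12 c t tau.
Definition b0 c tau := 2 * cr c + 6 * cs c * tau.
Definition uu22 c t tau := b0 c tau + t * (5 * cs c).
Definition WW c t tau := 1 + uu1 c t tau ^ 2 + uu2 c t tau ^ 2.
Definition W0 c := 1 + cp c ^ 2 + cq c ^ 2.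
Definition Wt c t tau := U1 c t tau * uu1 c t tau + cp c * U1 c t tau + U2 c t tau * uu2 c t tau + cq c * U2 c t tau.
Definition Wt0 c tau := cq1 c * cp c + cp c * cq1 c + U20 c tau * cq c + cq c * U20 c tau.
Definition U1p c tau := cr1 c + cs1 c * tau.
Definition Wtp c t tau := U1p c tau * uu1 c t tau + cq1 c * U1 c t tau + cp c * U1p c tau
  + cs c * uu2 c t tau + U20 c tau * U2 c t tau + cq c * cs c.
Definition aa c t tau := uu11 c t tau + uu22 c t tau.
Definition a0 c tau := cP c + b0 c tau.
Definition ap c t tau := U11 c t tau + 5 * cs c.
Definition NN c t tau :=
  let u1 := uu1 c t tau in let u2 := uu2 c t tau in
  let u11 := uu11 c t tau in let u12 := uu12 c t tau in let u22 := uu22 c t tau in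
  u1 * u1 * u11 + u1 * u2 * u12 + u2 * u1 * u12 + u2 * u2 * u22.
Definition N0 c tau := cp c * cp c * cP c + cp c * cq c * cq1 c + cq c * cp c * cq1 c + cq c * cq c * b0 c tau.
Definition Np c t tau :=
  let u1 := uu1 c t tau in let u2 := uu2 c t tau in
  let u11 := uu11 c t tau in let u12 := uu12 c t tau in let u22 := uu22 c t tau in
  let p := cp c in let q := cq c in
  let V1 := U1 c t tau in let V2 := U2 c t tau in
  V1*u1*u11 + p*(V1*u11 + p*U11 c t tau) + V1*u2*u12 + p*(V2*u12 + q*U12 c t tau)
  + V2*u1*u12 + q*(V1*u12 + p*U12 c t tau) + V2*u2*u22 + q*(V2*u22 + q*(5*cs c)).
Definition Mp c k t tau :=
  Wt c t tau * aa c t tau + W0 c * ap c t tau - Np c t tau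
  - 2 * (cs c * WW c t tau + U20 c tau * Wt c t tau)
  + k * (Wtp c t tau * WW c t tau + Wt0 c tau * Wt c t tau).
Definition M0 c k tau := W0 c * a0 c tau - N0 c tau - 2 * U20 c tau * W0 c + k * Wt0 c tau * W0 c.
Definition Qf c H t tau :=
  aa c t tau - NN c t tau / WW c t tau - 2 / t * (uu2 c t tau - H * sqrt (WW c t tau)).

Ltac unf := unfold Mp, M0, Np, N0, NN, a0, ap, aa, Wtp, U1p, Wt0, Wt, W0, WW, uu22, b0, uu12, uu11, uu2, uu1, U12, U11, U20, U2, U1; cbv zeta.

Lemma L_W c t tau : WW c t tau = W0 c + t * Wt c t tau.
Proof. unf. ring. Qed.
Lemma L_Wt c t tau : Wt c t tau = Wt0 c tau + t * Wtp c t tau.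
Proof. unf. ring. Qed.
Lemma L_M c k t tau :
  WW c t tau * aa c t tau - NN c t tau - 2 * U2 c t tau * WW c t tau + k * Wt c t tau * WW c t tau
  = M0 c k tau + t * Mp c k t tau.
Proof. unf. ring. Qed.

Lemma WW_pos c t tau : 0 < WW c t tau.
Proof. unfold WW. pose proof (pow2_ge_0 (uu1 c t tau)). pose proof (pow2_ge_0 (uu2 c t tau)). lra. Qed.
Lemma W0_pos c : 0 < W0 c.
Proof. unfold W0. pose proof (pow2_ge_0 (cp c)). pose proof (pow2_ge_0 (cq c)). lra. Qed.

Ltac piece := eapply lim_val; [unf; lim_rec | unf; ring].

Lemma Luu2 c : filterlim (fun t => uu2 c t (t * ln t)) F0 (locally (cq c)).
Proof. piece. Qed.
Lemma Laa c : filterlim (fun t => aa c t (t * ln t)) F0 (locally (aa c 0 0)).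
Proof. piece. Qed.
Lemma LNN c : filterlim (fun t => NN c t (t * ln t)) F0 (locally (NN c 0 0)).
Proof. piece. Qed.
Lemma LWW c : filterlim (fun t => WW c t (t * ln t)) F0 (locally (W0 c)).
Proof. piece. Qed.
Lemma LWt c : filterlim (fun t => Wt c t (t * ln t)) F0 (locally (Wt0 c 0)).
Proof. piece. Qed.
Lemma LU2 c : filterlim (fun t => U2 c t (t * ln t)) F0 (locally (2 * cr c)).
Proof. piece. Qed.
Lemma LMp c k : filterlim (fun t => Mp c k t (t * ln t)) F0 (locally (Mp c k 0 0)).
Proof. piece. Qed.
Lemma Lsq c : filterlim (fun t => sqrt (WW c t (t * ln t))) F0 (locally (sqrt (W0 c))).
Proof. apply (lim_sqrt (fun t => WW c t (t * ln t))). left; apply W0_pos. apply LWW. Qed.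

Lemma ev_pos : F0 (fun t => 0 < t).
Proof. exists (mkposreal 1 Rlt_0_1). intros; auto. Qed.

Ltac pieces c := pose proof (Luu2 c); pose proof (Laa c); pose proof (LNN c); pose proof (LWW c);
  pose proof (LWt c); pose proof (LU2 c); pose proof (Lsq c).

Lemma step1 c H : filterlim (fun t => Qf c H t (t*ln t) / t) F0 (locally 0) -> cq c = H * sqrt (W0 c).
Proof.
  intros Hl.
  assert (A: filterlim (fun t => t * t * (Qf c H t (t*ln t)/t)) F0 (locally 0)).
  { eapply lim_val. eapply (lim_mult (fun t => t*t)). eapply (lim_mult (fun t=>t) (fun t=>t)); apply lim_id. exact Hl. ring. }
  pieces c.
  assert (B: filterlim (fun t => t * (aa c t (t*ln t) - NN c t (t*ln t) / WW c t (t*ln t)) - 2 * (uu2 c t (t*ln t) - H * sqrt (WW c t (t*ln t)))) F0 (locally (0 * (aa c 0 0 - NN c 0 0 / W0 c) - 2 * (cq c - H * sqrt (W0 c))))).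
  { eapply lim_val. lim_rec. apply Rgt_not_eq, W0_pos. reflexivity. }
  apply (filterlim_ext_loc _ (fun t => t * (aa c t (t*ln t) - NN c t (t*ln t) / WW c t (t*ln t)) - 2 * (uu2 c t (t*ln t) - H * sqrt (WW c t (t*ln t))))) in A.
  - pose proof (lim_uniq _ _ _ A B). lra.
  - apply (filter_imp (fun t => 0 < t)); [|apply ev_pos]. intros t Ht. unfold Qf. field.
    split; [apply Rgt_not_eq, WW_pos | lra].
Qed.

Lemma alg2 (a N W U2 t H q S0 Z Wt u2 : R) : t <> 0 -> Z + S0 <> 0 -> W <> 0 -> u2 = q + t*U2 -> q = H*S0 ->
  Z*Z = S0*S0 + t*Wt ->
  a - N/W - 2/t*(u2 - H*Z) = a - N/W - 2*U2 + 2*H*Wt/(Z+S0).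
Proof.
  intros Ht HD HW Hu Hq HZ.
  assert (E : Wt = (Z - S0) * (Z + S0) / t).
  { apply (Rmult_eq_reg_l t); [|auto]. field_simplify; [|auto]. lra. }
  rewrite E, Hu, Hq. field. auto.
Qed.

Lemma alg3 (a N W U2 Wt t H q S0 Z u2 k M0 Mp : R) : t <> 0 -> S0 > 0 -> Z >= 0 -> W <> 0 ->
  u2 = q + t*U2 -> q = H*S0 -> Z*Z = S0*S0 + t*Wt -> k = H/S0 ->
  W*a - N - 2*U2*W + k*Wt*W = M0 + t*Mp -> M0 = 0 ->
  (a - N/W - 2/t*(u2 - H*Z))/t = Mp/W - k*Wt^2/(Z+S0)^2.
Proof.
  intros Ht HS HZ HW Hu Hq HZZ Hk HM HM0.
  rewrite (alg2 a N W U2 t H q S0 Z Wt u2); auto; [|lra].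
  assert (EM : Mp = (W*a - N - 2*U2*W + k*Wt*W - M0)/t).
  { apply (Rmult_eq_reg_l t); [|auto]. field_simplify; [|auto]. lra. }
  assert (E : Wt = (Z - S0) * (Z + S0) / t).
  { apply (Rmult_eq_reg_l t); [|auto]. field_simplify; [|auto]. lra. }
  rewrite EM, HM0, Hk. rewrite E. field. repeat split; auto; lra.
Qed.

Lemma sqrt_facts c : sqrt (W0 c) > 0 /\ sqrt (W0 c) * sqrt (W0 c) = W0 c.
Proof. split. apply sqrt_lt_R0, W0_pos. apply sqrt_sqrt. left; apply W0_pos. Qed.

Lemma sqrtWW c t tau : sqrt (WW c t tau) >= 0 /\ sqrt (WW c t tau) * sqrt (WW c t tau) = WW c t tau.
Proof. split. apply Rle_ge, sqrt_pos. apply sqrt_sqrt. left; apply WW_pos. Qed.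

Lemma step2 c H : filterlim (fun t => Qf c H t (t*ln t) / t) F0 (locally 0) -> cq c = H * sqrt (W0 c) ->
  cP c * (1 + cq c ^ 2) = 2 * cr c * (1 + cp c ^ 2).
Proof.
  intros Hl Hq.
  destruct (sqrt_facts c) as [HS HS2].
  assert (A: filterlim (fun t => t * (Qf c H t (t*ln t)/t)) F0 (locally 0)).
  { eapply lim_val. eapply (lim_mult (fun t => t)). apply lim_id. exact Hl. ring. }
  pieces c.
  assert (B: filterlim (fun t => aa c t (t*ln t) - NN c t (t*ln t) / WW c t (t*ln t) - 2 * U2 c t (t*ln t)
     + 2 * H * Wt c t (t*ln t) / (sqrt (WW c t (t*ln t)) + sqrt (W0 c))) F0
     (locally (aa c 0 0 - NN c 0 0 / W0 c - 2 * (2 * cr c) + 2 * H * Wt0 c 0 / (sqrt (W0 c) + sqrt (W0 c))))).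
  { eapply lim_val. lim_rec. all: try (apply Rgt_not_eq; lra). apply Rgt_not_eq, W0_pos. reflexivity. }
  apply (filterlim_ext_loc _ (fun t => aa c t (t*ln t) - NN c t (t*ln t) / WW c t (t*ln t) - 2 * U2 c t (t*ln t)
     + 2 * H * Wt c t (t*ln t) / (sqrt (WW c t (t*ln t)) + sqrt (W0 c)))) in A.
  - pose proof (lim_uniq _ _ _ A B) as E.
    assert (E1 : 2 * H * Wt0 c 0 / (sqrt (W0 c) + sqrt (W0 c)) = cq c * Wt0 c 0 / W0 c).
    { clear -Hq HS HS2. set (S0 := sqrt (W0 c)) in *. rewrite Hq, <- HS2. field. lra. }
    rewrite E1 in E.
    assert (E2 : (aa c 0 0 - NN c 0 0 / W0 c - 2 * (2 * cr c) + cq c * Wt0 c 0 / W0 c) * W0 c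
                 = cP c * (1 + cq c ^ 2) - 2 * cr c * (1 + cp c ^ 2)).
    { pose proof (W0_pos c) as HW0. unf. field. unfold W0 in HW0. lra. }
    rewrite <- E in E2. lra.
  - apply (filter_imp (fun t => 0 < t)); [|apply ev_pos]. intros t Ht.
    destruct (sqrtWW c t (t * ln t)) as [HZ HZ2].
    set (tau := t * ln t) in *.
    assert (Ht0 : t <> 0) by lra.
    assert (HWW : WW c t tau <> 0) by (apply Rgt_not_eq, WW_pos).
    assert (HD : sqrt (WW c t tau) + sqrt (W0 c) <> 0) by lra.
    unfold Qf. rewrite (alg2 (aa c t tau) (NN c t tau) (WW c t tau) (U2 c t tau) t H (cq c) (sqrt (W0 c))
      (sqrt (WW c t tau)) (Wt c t tau) (uu2 c t tau)).
    + field. repeat split; auto.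
    + auto.
    + auto.
    + auto.
    + reflexivity.
    + exact Hq.
    + rewrite HZ2, HS2, L_W. ring.
Qed.

Definition Final c := Mp c (cq c / W0 c) 0 0 / W0 c - (cq c / W0 c) * Wt0 c 0 ^ 2 / (4 * W0 c).

Lemma M0_zero c tau : cP c * (1 + cq c ^ 2) = 2 * cr c * (1 + cp c ^ 2) -> M0 c (cq c / W0 c) tau = 0.
Proof.
  intros E. pose proof (W0_pos c) as HW.
  assert (M0 c (cq c / W0 c) tau = cP c * (1 + cq c ^ 2) - 2 * cr c * (1 + cp c ^ 2)).
  { unf. field. unfold W0 in HW. lra. }
  lra.
Qed.

Lemma step3 c H : filterlim (fun t => Qf c H t (t*ln t) / t) F0 (locally 0) -> cq c = H * sqrt (W0 c) ->
  cP c * (1 + cq c ^ 2) = 2 * cr c * (1 + cp c ^ 2) -> Final c = 0.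
Proof.
  intros Hl Hq E2.
  destruct (sqrt_facts c) as [HS HS2].
  pose proof (W0_pos c) as HW.
  set (k := cq c / W0 c).
  assert (Hk : k = H / sqrt (W0 c)).
  { unfold k. clear -Hq HS HS2 HW. set (S0 := sqrt (W0 c)) in *. rewrite Hq, <- HS2. field. lra. }
  pieces c. pose proof (LMp c k).
  assert (B: filterlim (fun t => Mp c k t (t*ln t) / WW c t (t*ln t) - k * Wt c t (t*ln t) ^ 2 / (sqrt (WW c t (t*ln t)) + sqrt (W0 c)) ^ 2) F0
     (locally (Mp c k 0 0 / W0 c - k * Wt0 c 0 ^ 2 / (sqrt (W0 c) + sqrt (W0 c)) ^ 2))).
  { eapply lim_val. lim_rec. all: try (apply Rgt_not_eq; lra). all: try reflexivity. all: apply pow_nonzero; lra. }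
  apply (filterlim_ext_loc _ (fun t => Mp c k t (t*ln t) / WW c t (t*ln t) - k * Wt c t (t*ln t) ^ 2 / (sqrt (WW c t (t*ln t)) + sqrt (W0 c)) ^ 2)) in Hl.
  - pose proof (lim_uniq _ _ _ Hl B) as E.
    unfold Final. fold k.
    transitivity (Mp c k 0 0 / W0 c - k * Wt0 c 0 ^ 2 / (sqrt (W0 c) + sqrt (W0 c)) ^ 2); [|symmetry; exact E].
    replace ((sqrt (W0 c) + sqrt (W0 c)) ^ 2) with (4 * (sqrt (W0 c) * sqrt (W0 c))) by ring. rewrite HS2.
    reflexivity.
  - apply (filter_imp (fun t => 0 < t)); [|apply ev_pos]. intros t Ht.
    destruct (sqrtWW c t (t * ln t)) as [HZ HZ2].
    set (tau := t * ln t) in *.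
    assert (Ht0 : t <> 0) by lra.
    assert (HWW : WW c t tau <> 0) by (apply Rgt_not_eq, WW_pos).
    unfold Qf. apply (alg3 (aa c t tau) (NN c t tau) (WW c t tau) (U2 c t tau) (Wt c t tau) t H (cq c) (sqrt (W0 c))
      (sqrt (WW c t tau)) (uu2 c t tau) k (M0 c k tau) (Mp c k t tau)); auto.
    + rewrite HZ2, HS2, L_W. ring.
    + apply L_M.
    + apply M0_zero; auto.
Qed.

Lemma final_alg p P q q1 q2 r r1 r2 s s1 s2 P3 :
  q1 * (1 + p^2) = q * p * P ->
  q2 * (1 + p^2) + q1 * (2 * p * P) = q1 * p * P + q * P * P + q * p * P3 ->
  P * (1 + q^2) = 2 * r * (1 + p^2) ->
  P3 * (1 + q^2) + P * (2 * q * q1) = 2 * r1 * (1 + p^2) + 2 * r * (2 * p * P) ->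
  Final (Build_prm p P q q1 q2 r r1 r2 s s1 s2) = 0 -> s = 0.
Proof.
  intros R1 R2 R3 R4 HF.
  assert (Hp : 1 + p^2 > 0) by (pose proof (pow2_ge_0 p); lra).
  assert (Hw : 1 + p^2 + q^2 > 0) by (pose proof (pow2_ge_0 p); pose proof (pow2_ge_0 q); lra).
  assert (E1 : q1 = q * p * P / (1 + p^2)) by (apply (Rmult_eq_reg_r (1 + p^2)); [field_simplify; lra | lra]).
  assert (E3 : r = P * (1 + q^2) / (2 * (1 + p^2))) by (apply (Rmult_eq_reg_r (2 * (1 + p^2))); [field_simplify; lra | lra]).
  assert (E2 : q2 = (q1 * p * P + q * P * P + q * p * P3 - q1 * (2 * p * P)) / (1 + p^2)) by (apply (Rmult_eq_reg_r (1 + p^2)); [field_simplify; lra | lra]).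
  assert (E4 : r1 = (P3 * (1 + q^2) + P * (2 * q * q1) - 2 * r * (2 * p * P)) / (2 * (1 + p^2))) by (apply (Rmult_eq_reg_r (2 * (1 + p^2))); [field_simplify; lra | lra]).
  subst q2 r1. subst q1 r.
  match type of HF with Final ?c = 0 =>
  assert (EF : Final c = 3 * s * (1 + p^2) / (1 + p^2 + q^2)) by (unfold Final; unf; simpl; field; split; lra) end.
  rewrite EF in HF.
  assert (3 * s * (1 + p^2) = 0).
  { apply (Rmult_eq_reg_r (/ (1 + p^2 + q^2))). rewrite Rmult_0_l. exact HF. apply Rgt_not_eq, Rlt_gt, Rinv_0_lt_compat. lra. }
  apply Rmult_integral in H. destruct H as [H|H]; [lra|lra].
Qed.

Definition mk (phi c1 c2 c31 : R -> R) x := Build_prm (Derive phi x) (Derive (Derive phi) x) (c1 x) (Derive c1 x)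
  (Derive (Derive c1) x) (c2 x) (Derive c2 x) (Derive (Derive c2) x) (c31 x) (Derive c31 x) (Derive (Derive c31) x).

Lemma Qop_eq H (phi c1 c2 c31 : R -> R) x t :
  -1 < x < 1 -> Ck_on 5 phi (-1) 1 -> Ck_on 2 c1 (-1) 1 -> Ck_on 2 c2 (-1) 1 -> Ck_on 2 c31 (-1) 1 -> 0 < t ->
  Qop H (ustar phi c1 c2 c31) x t = Qf (mk phi c1 c2 c31 x) H t (t * ln t).
Proof.
  intros Hx Hp H1 H2 H3 Ht.
  assert (ep : ex_derive phi x) by exact (Ck_ex 5 phi _ _ x 1 Hp Hx ltac:(lia)).
  assert (e1 : ex_derive c1 x) by exact (Ck_ex 2 c1 _ _ x 1 H1 Hx ltac:(lia)).
  assert (e2 : ex_derive c2 x) by exact (Ck_ex 2 c2 _ _ x 1 H2 Hx ltac:(lia)).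
  assert (e3 : ex_derive c31 x) by exact (Ck_ex 2 c31 _ _ x 1 H3 Hx ltac:(lia)).
  unfold Qop. cbv zeta.
  rewrite (D1 phi c1 c2 c31 x t ep e1 e2 e3), (D2 phi c1 c2 c31 x t Ht), (D11 phi c1 c2 c31 x t Hx Hp H1 H2 H3),
    (D22 phi c1 c2 c31 x t Ht), (D12 phi c1 c2 c31 x t Ht ep e1 e2 e3), (D21 phi c1 c2 c31 x t Ht e1 e2 e3).
  set (c := mk phi c1 c2 c31 x).
  assert (E1 : Derive phi x + Derive c1 x * t + Derive c2 x * t ^ 2 + Derive c31 x * t ^ 3 * ln t = uu1 c t (t * ln t))
    by (unfold c; unf; simpl; ring).
  assert (E2 : c1 x + 2 * c2 x * t + c31 x * (3 * t ^ 2 * ln t + t ^ 2) = uu2 c t (t * ln t))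
    by (unfold c; unf; simpl; ring).
  assert (E11 : Derive (Derive phi) x + Derive (Derive c1) x * t + Derive (Derive c2) x * t ^ 2 + Derive (Derive c31) x * t ^ 3 * ln t = uu11 c t (t * ln t))
    by (unfold c; unf; simpl; ring).
  assert (E22 : 2 * c2 x + c31 x * (6 * t * ln t + 5 * t) = uu22 c t (t * ln t))
    by (unfold c; unf; simpl; ring).
  assert (E12 : Derive c1 x + 2 * Derive c2 x * t + Derive c31 x * (3 * t ^ 2 * ln t + t ^ 2) = uu12 c t (t * ln t))
    by (unfold c; unf; simpl; ring).
  rewrite E1, E2, E11, E22, E12.
  unfold Qf, aa, NN, WW. cbv zeta. reflexivity.
Qed.

Lemma hypQf H (phi c1 c2 c31 : R -> R) x :
  -1 < x < 1 -> Ck_on 5 phi (-1) 1 -> Ck_on 2 c1 (-1) 1 -> Ck_on 2 c2 (-1) 1 -> Ck_on 2 c31 (-1) 1 ->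
  filterlim (fun x2 => Qop H (ustar phi c1 c2 c31) x x2 / x2) (at_right 0) (locally 0) ->
  filterlim (fun t => Qf (mk phi c1 c2 c31 x) H t (t * ln t) / t) F0 (locally 0).
Proof.
  intros Hx Hp H1 H2 H3 Hl.
  apply (filterlim_ext_loc (fun x2 => Qop H (ustar phi c1 c2 c31) x x2 / x2)); [|exact Hl].
  apply (filter_imp (fun t => 0 < t)); [|apply ev_pos]. intros t Ht.
  rewrite Qop_eq; auto.
Qed.

Theorem proposition2p2 (H : R) (phi c1 c2 c31 : R -> R) :
  Rabs H < 1 ->
  Ck_on 5 phi (-1) 1 ->
  Ck_on 2 c1 (-1) 1 -> Ck_on 2 c2 (-1) 1 -> Ck_on 2 c31 (-1) 1 ->
  (forall x1, -1 < x1 < 1 ->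
     filterlim (fun x2 => Qop H (ustar phi c1 c2 c31) x1 x2 / x2)
       (at_right 0) (locally 0)) ->
  forall x1, -1 < x1 < 1 -> c31 x1 = 0.
Proof.
  intros HH Hp H1 H2 H3 Hlim x1 Hx.
  assert (HQ : forall x, -1 < x < 1 -> filterlim (fun t => Qf (mk phi c1 c2 c31 x) H t (t * ln t) / t) F0 (locally 0)).
  { intros x Hx'. apply hypQf; auto. }
  assert (S1 : forall x, -1 < x < 1 -> c1 x = H * sqrt (1 + Derive phi x ^ 2 + c1 x ^ 2)).
  { intros x Hx'. exact (step1 _ _ (HQ x Hx')). }
  assert (S2 : forall x, -1 < x < 1 -> Derive (Derive phi) x * (1 + c1 x ^ 2) = 2 * c2 x * (1 + Derive phi x ^ 2)).
  { intros x Hx'. exact (step2 _ _ (HQ x Hx') (step1 _ _ (HQ x Hx'))). }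
  assert (R1 : forall x, -1 < x < 1 -> Derive c1 x * (1 + Derive phi x ^ 2) = c1 x * Derive phi x * Derive (Derive phi) x).
  { intros x Hx'.
    assert (ep : ex_derive (Derive phi) x) by exact (Ck_ex 5 phi _ _ x 2 Hp Hx' ltac:(lia)).
    assert (e1 : ex_derive c1 x) by exact (Ck_ex 2 c1 _ _ x 1 H1 Hx' ltac:(lia)).
    assert (HW : 0 < 1 + Derive phi x ^ 2 + c1 x ^ 2) by (pose proof (pow2_ge_0 (Derive phi x)); pose proof (pow2_ge_0 (c1 x)); lra).
    assert (d : Derive c1 x = H * (Derive phi x * Derive (Derive phi) x + c1 x * Derive c1 x) / sqrt (1 + Derive phi x ^ 2 + c1 x ^ 2)).
    { assert (Dd : is_derive (fun y => H * sqrt (1 + Derive phi y ^ 2 + c1 y ^ 2)) x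
         (H * (Derive phi x * Derive (Derive phi) x + c1 x * Derive c1 x) / sqrt (1 + Derive phi x ^ 2 + c1 x ^ 2))).
      { auto_derive.
        + repeat split; auto.
        + eta_fix. replace (1 + Derive phi x * (Derive phi x * 1) + c1 x * (c1 x * 1)) with (1 + Derive phi x ^ 2 + c1 x ^ 2) by ring.
          field. apply Rgt_not_eq, sqrt_lt_R0. auto. }
      transitivity (Derive (fun y => H * sqrt (1 + Derive phi y ^ 2 + c1 y ^ 2)) x).
      - apply Derive_ext_loc.
        apply (filter_imp (fun s => -1 < s < 1)); [|apply loc_int; auto].
        intros s Hs. apply S1; auto.
      - apply is_derive_unique. exact Dd. }
    pose proof (S1 x Hx') as s1.
    set (S0 := sqrt (1 + Derive phi x ^ 2 + c1 x ^ 2)) in *.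
    assert (HS : 0 < S0) by (apply sqrt_lt_R0; auto).
    assert (HS2 : S0 * S0 = 1 + Derive phi x ^ 2 + c1 x ^ 2) by (apply sqrt_sqrt; lra).
    assert (E : Derive c1 x * (S0 * S0) = (H * S0) * (Derive phi x * Derive (Derive phi) x + c1 x * Derive c1 x)).
    { rewrite d at 1. field. lra. }
    rewrite HS2, <- s1 in E. nra. }
  assert (ep1 : ex_derive phi x1) by exact (Ck_ex 5 phi _ _ x1 1 Hp Hx ltac:(lia)).
  assert (ep2 : ex_derive (Derive phi) x1) by exact (Ck_ex 5 phi _ _ x1 2 Hp Hx ltac:(lia)).
  assert (ep3 : ex_derive (Derive (Derive phi)) x1) by exact (Ck_ex 5 phi _ _ x1 3 Hp Hx ltac:(lia)).
  assert (e11 : ex_derive c1 x1) by exact (Ck_ex 2 c1 _ _ x1 1 H1 Hx ltac:(lia)).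
  assert (e12 : ex_derive (Derive c1) x1) by exact (Ck_ex 2 c1 _ _ x1 2 H1 Hx ltac:(lia)).
  assert (e21 : ex_derive c2 x1) by exact (Ck_ex 2 c2 _ _ x1 1 H2 Hx ltac:(lia)).
  assert (R2 : Derive (Derive c1) x1 * (1 + Derive phi x1 ^ 2) + Derive c1 x1 * (2 * Derive phi x1 * Derive (Derive phi) x1)
     = Derive c1 x1 * Derive phi x1 * Derive (Derive phi) x1 + c1 x1 * Derive (Derive phi) x1 * Derive (Derive phi) x1
       + c1 x1 * Derive phi x1 * Derive (Derive (Derive phi)) x1).
  { assert (Da : is_derive (fun y => Derive c1 y * (1 + Derive phi y ^ 2)) x1
       (Derive (Derive c1) x1 * (1 + Derive phi x1 ^ 2) + Derive c1 x1 * (2 * Derive phi x1 * Derive (Derive phi) x1))).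
    { auto_derive. repeat split; auto. eta_fix. ring. }
    assert (Db : is_derive (fun y => c1 y * Derive phi y * Derive (Derive phi) y) x1
       (Derive c1 x1 * Derive phi x1 * Derive (Derive phi) x1 + c1 x1 * Derive (Derive phi) x1 * Derive (Derive phi) x1
       + c1 x1 * Derive phi x1 * Derive (Derive (Derive phi)) x1)).
    { auto_derive. repeat split; auto. eta_fix. ring. }
    apply is_derive_unique in Da. apply is_derive_unique in Db.
    rewrite <- Da, <- Db. apply Derive_ext_loc.
    apply (filter_imp (fun s => -1 < s < 1)); [|apply loc_int; auto].
    intros s Hs. apply R1; auto. }
  assert (R4 : Derive (Derive (Derive phi)) x1 * (1 + c1 x1 ^ 2) + Derive (Derive phi) x1 * (2 * c1 x1 * Derive c1 x1)
     = 2 * Derive c2 x1 * (1 + Derive phi x1 ^ 2) + 2 * c2 x1 * (2 * Derive phi x1 * Derive (Derive phi) x1)).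
  { assert (Da : is_derive (fun y => Derive (Derive phi) y * (1 + c1 y ^ 2)) x1
       (Derive (Derive (Derive phi)) x1 * (1 + c1 x1 ^ 2) + Derive (Derive phi) x1 * (2 * c1 x1 * Derive c1 x1))).
    { auto_derive. repeat split; auto. eta_fix. ring. }
    assert (Db : is_derive (fun y => 2 * c2 y * (1 + Derive phi y ^ 2)) x1
       (2 * Derive c2 x1 * (1 + Derive phi x1 ^ 2) + 2 * c2 x1 * (2 * Derive phi x1 * Derive (Derive phi) x1))).
    { auto_derive. repeat split; auto. eta_fix. ring. }
    apply is_derive_unique in Da. apply is_derive_unique in Db.
    rewrite <- Da, <- Db. apply Derive_ext_loc.
    apply (filter_imp (fun s => -1 < s < 1)); [|apply loc_int; auto].
    intros s Hs. apply S2; auto. }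
  pose proof (step3 _ _ (HQ x1 Hx) (step1 _ _ (HQ x1 Hx)) (step2 _ _ (HQ x1 Hx) (step1 _ _ (HQ x1 Hx)))) as HF.
  exact (final_alg _ _ _ _ _ _ _ _ _ _ _ _ (R1 x1 Hx) R2 (S2 x1 Hx) R4 HF).
Qed.
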